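(* For every nonnegative integer $n$, $$\sum_{k=0}^{\infty}(-1)^k(4k+1)\,\frac{(-3n)_k\,(-n+\tfrac13)_k\,(\tfrac12)_k}{k!\,(n+\tfrac76)_k\,(3n+\tfrac32)_k}=\left(\frac{3^3}{2^8}\right)^n\frac{(\tfrac56)_n(\tfrac12)_n(\tfrac76)_n^2}{(\tfrac{25}{24})_n(\tfrac{7}{24})_n(\tfrac{13}{24})_n(\tfrac{19}{24})_n}.$$ (The sum is finite, since $(-3n)_k=0$ for $k>3n$.)
   Context: $(a)_j=\Gamma(a+j)/\Gamma(a)=a(a+1)\cdots(a+j-1)$ denotes the rising factorial (Pochhammer symbol), with $(a)_0=1$. *)

(* Defs.v *)
From HB Require Import structures.
From mathcomp Require Import all_boot all_order all_algebra.
Set Implicit Arguments. Unset Strict Implicit. Unset Printing Implicit Defensive.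
Import Order.TTheory GRing.Theory Num.Theory.
Local Open Scope ring_scope.

Definition poch (a : rat) (j : nat) : rat := \prod_(i < j) (a + i%:R).

Definition term5 (n k : nat) : rat :=
  (-1) ^+ k * (4 * k%:R + 1) *
  (poch (- (3 * n%:R)) k * poch (- n%:R + 1/3) k * poch (1/2) k) /
  ((k`!)%:R * poch (n%:R + 7/6) k * poch (3 * n%:R + 3/2) k).

(* Main.v *)
Require Import Defs.
From HB Require Import structures.
From mathcomp Require Import all_boot all_order all_algebra.
From Stdlib Require Import ZArith Lia Ring Field.
Import Order.TTheory GRing.Theory Num.Theory.
Local Open Scope ring_scope.
Delimit Scope nat_scope with N.

Definition Zr (z : Z) : rat :=
  match z with Z0 => 0 | Zpos p => (Pos.to_nat p)%:R | Zneg p => - (Pos.to_nat p)%:R end.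

Lemma ZrE z : Zr z = (Z.to_nat z)%:R - (Z.to_nat (- z)%Z)%:R.
Proof. by case: z => [|p|p] /=; rewrite ?subr0 ?sub0r. Qed.

Lemma ZrD a b : Zr (Z.of_nat a - Z.of_nat b)%Z = a%:R - b%:R.
Proof.
rewrite ZrE.
have [hab|hba] := leqP a b.
- have h1 : Z.to_nat (Z.of_nat a - Z.of_nat b)%Z = O by move/ssrnat.leP: hab; lia.
  have h2 : Z.to_nat (- (Z.of_nat a - Z.of_nat b))%Z = subn b a.
    move/ssrnat.leP: hab => hab. rewrite -minusE. lia.
  by rewrite h1 h2 natrB // sub0r opprB.
- have h1 : Z.to_nat (Z.of_nat a - Z.of_nat b)%Z = subn a b.
    move/ssrnat.ltP: hba => hab. rewrite -minusE. lia.
  have h2 : Z.to_nat (- (Z.of_nat a - Z.of_nat b))%Z = O by move/ssrnat.ltP: hba; lia.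
  by rewrite h1 h2 natrB ?subr0 // ltnW.
Qed.

Lemma Zrep z : exists a b, z = (Z.of_nat a - Z.of_nat b)%Z.
Proof. exists (Z.to_nat z), (Z.to_nat (- z)); lia. Qed.


Definition radd : rat -> rat -> rat := @Algebra.add rat_rat__canonical__Algebra_BaseAddMagma.
Definition rmul : rat -> rat -> rat := @GRing.mul rat_rat__canonical__GRing_PzSemiRing.
Definition ropp : rat -> rat := @Algebra.opp rat_rat__canonical__Algebra_BaseZmodule.
Definition rinv : rat -> rat := @GRing.inv rat_rat__canonical__GRing_UnitRing.
Definition rsub (x y : rat) := x - y.
Definition rdiv (x y : rat) := x / y.
Definition r0 : rat := 0.
Definition r1 : rat := 1.
Definition rnat (n : nat) : rat := n%:R.

Lemma rat_rt : ring_theory r0 r1 radd rmul rsub ropp (@eq rat).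
Proof.
split=> //.
- exact: add0r.
- exact: addrC.
- exact: addrA.
- exact: mul1r.
- exact: mulrC.
- exact: mulrA.
- exact: mulrDl.
- exact: subrr.
Qed.

Lemma rat_ft : field_theory r0 r1 radd rmul rsub ropp rdiv rinv (@eq rat).
Proof.
split=> //.
- exact: rat_rt.
- by move=> x hx; apply: mulVf; apply/eqP.
Qed.

Lemma Zr_morph : ring_morph r0 r1 radd rmul rsub ropp (@eq rat) 0%Z 1%Z Z.add Z.mul Z.sub Z.opp Z.eqb Zr.
Proof.
rewrite /r0 /r1 /radd /rmul /rsub /ropp.
split=> //.
- move=> x y; case: (Zrep x) => a [b ->]; case: (Zrep y) => c [d ->].
  have -> : (Z.of_nat a - Z.of_nat b + (Z.of_nat c - Z.of_nat d) = Z.of_nat (addn a c) - Z.of_nat (addn b d))%Z by rewrite -?plusE -?multE; lia.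
  rewrite !ZrD !natrD. by rewrite opprD addrACA.
- move=> x y; case: (Zrep x) => a [b ->]; case: (Zrep y) => c [d ->].
  have -> : (Z.of_nat a - Z.of_nat b - (Z.of_nat c - Z.of_nat d) = Z.of_nat (addn a d) - Z.of_nat (addn b c))%Z by rewrite -?plusE -?multE; lia.
  rewrite !ZrD !natrD opprB. rewrite opprD addrACA. by rewrite [_ - _ + _]addrC addrA.
- move=> x y; case: (Zrep x) => a [b ->]; case: (Zrep y) => c [d ->].
  have -> : ((Z.of_nat a - Z.of_nat b) * (Z.of_nat c - Z.of_nat d) = Z.of_nat (addn (muln a c) (muln b d)) - Z.of_nat (addn (muln a d) (muln b c)))%Z by rewrite -?plusE -?multE; lia.
  rewrite !ZrD !natrD !natrM mulrBl !mulrBr opprB !opprD !addrA; congr (_ + _).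
  by rewrite addrAC.
- move=> x; case: (Zrep x) => a [b ->].
  have -> : (- (Z.of_nat a - Z.of_nat b) = Z.of_nat b - Z.of_nat a)%Z by rewrite -?plusE -?multE; lia.
  by rewrite !ZrD opprB.
- by move=> x y /Z.eqb_eq ->.
Qed.

Ltac isnat n := lazymatch n with O => idtac | S ?m => isnat m end.
Ltac ratcst t :=
  lazymatch t with
  | Zr ?z => constr:(z)
  | rnat ?n => match tt with
               | _ => let _ := match tt with _ => isnat n end in constr:(Z.of_nat n)
               | _ => constr:(InitialRing.NotConstant) end
  | _ => constr:(InitialRing.NotConstant)
  end.

Add Field ratF : rat_ft (morphism Zr_morph, constants [ratcst]).

Ltac nrm t :=
  lazymatch t with
  | @Algebra.add _ ?a ?b => let a' := nrm a in let b' := nrm b in constr:(radd a' b')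
  | @GRing.mul _ ?a ?b => let a' := nrm a in let b' := nrm b in constr:(rmul a' b')
  | @Algebra.opp _ ?a => let a' := nrm a in constr:(ropp a')
  | @GRing.inv _ ?a => let a' := nrm a in constr:(rinv a')
  | @Algebra.zero _ => constr:(r0)
  | @GRing.one _ => constr:(r1)
  | @Algebra.natmul _ (@GRing.one _) ?n => constr:(rnat n)
  | _ => t
  end.
Ltac toR := match goal with |- @eq _ ?a ?b =>
  let a' := nrm a in let b' := nrm b in change (@eq rat a' b') end.
Ltac rfield := toR; field.
Ltac rring := toR; ring.


Lemma pD1 (a b : rat) : 0 <= a -> 0 < b -> 0 < a + b.
Proof. move=> ha hb; exact: ltr_wpDl. Qed.
Lemma pD2 (a b : rat) : 0 < a -> 0 <= b -> 0 < a + b.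
Proof. move=> ha hb; exact: ltr_wpDr. Qed.
Lemma pM (a b : rat) : 0 < a -> 0 < b -> 0 < a * b.
Proof. exact: mulr_gt0. Qed.
Lemma nM (a b : rat) : 0 <= a -> 0 <= b -> 0 <= a * b.
Proof. exact: mulr_ge0. Qed.
Lemma nD (a b : rat) : 0 <= a -> 0 <= b -> 0 <= a + b.
Proof. exact: addr_ge0. Qed.
Lemma pV (a : rat) : 0 < a -> 0 < a^-1.
Proof. by rewrite invr_gt0. Qed.
Lemma pZr (p : positive) : 0 < Zr (Zpos p).
Proof. rewrite /= ltr0n; exact/ssrnat.ltP/Pos2Nat.is_pos. Qed.
Lemma pnat (m : nat) : 0 < (m.+1)%:R :> rat.
Proof. exact: ltr0Sn. Qed.
Lemma p1 : 0 < 1 :> rat.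
Proof. exact: ltr01. Qed.
Lemma neq0P (a : rat) : 0 < a -> a <> 0.
Proof. by move=> h; apply/eqP; rewrite lt0r_neq0. Qed.

Ltac ps := lazymatch goal with
  | |- is_true (@Order.lt _ _ _ ?t) => pst t
  | |- is_true (@Order.le _ _ _ ?t) => nnt t
  end
with pst t :=
  lazymatch t with
  | Zr _ => apply: pZr
  | r1 => apply: p1
  | @GRing.one _ => apply: p1
  | @Algebra.natmul _ _ (S _) => apply: pnat
  | rnat (S _) => apply: pnat
  | @Algebra.add _ _ _ => first [ apply: pD1; [ps|ps] | apply: pD2; [ps|ps] ]
  | radd _ _ => first [ apply: pD1; [ps|ps] | apply: pD2; [ps|ps] ]
  | @GRing.mul _ _ _ => apply: pM; ps
  | rmul _ _ => apply: pM; ps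
  | @GRing.inv _ _ => apply: pV; ps
  | rinv _ => apply: pV; ps
  | _ => assumption
  end
with nnt t :=
  lazymatch t with
  | @Algebra.natmul _ _ _ => apply: ler0n
  | rnat _ => apply: ler0n
  | @Algebra.add _ _ _ => apply: nD; ps
  | radd _ _ => apply: nD; ps
  | @GRing.mul _ _ _ => apply: nM; ps
  | rmul _ _ => apply: nM; ps
  | _ => first [ assumption | apply: ltW; ps ]
  end.
Ltac nn := ps.
Ltac sidec := repeat match goal with |- _ /\ _ => split end;
  try (apply: neq0P; ps).

Lemma poch0 a : poch a 0 = 1.
Proof. by rewrite /poch big_ord0. Qed.
Lemma pochS a j : poch a j.+1 = poch a j * (a + j%:R).
Proof. by rewrite /poch big_ord_recr. Qed.
Lemma poch_shift a j : poch (a + 1) j * a = poch a j * (a + j%:R).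
Proof.
elim: j => [|j IH]; first by rewrite !poch0 !mul1r addr0.
rewrite !pochS mulrAC IH -!mulrA; congr (_ * (_ * _)).
by rewrite -natr1 [_%:R + 1]addrC addrA.
Qed.
Lemma poch_gt0 a j : 0 < a -> 0 < poch a j.
Proof.
move=> ha; elim: j => [|j IH]; first by rewrite poch0.
by rewrite pochS; apply: pM => //; apply: pD2 => //; apply: ler0n.
Qed.
Lemma poch_negnat m j : (m < j)%N -> poch (- m%:R) j = 0.
Proof.
elim: j => [//|j IH]; rewrite ltnS leq_eqVlt => /orP [/eqP ->|h].
- by rewrite pochS addNr mulr0.
- by rewrite pochS IH // mul0r.
Qed.

Lemma div_intro (a c d : rat) : d <> 0 -> a * d = c -> a = c / d.
Proof. by move=> /eqP hd <-; rewrite mulfK. Qed.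

Definition base (m k : nat) : rat :=
  (-1) ^+ k * (poch (- (3 * m%:R)) k * poch (- m%:R + 1/3) k * poch (1/2) k) /
  ((k`!)%:R * poch (m%:R + 7/6) k * poch (3 * m%:R + 3/2) k).

Lemma term5E m k : term5 m k = (4 * k%:R + 1) * base m k.
Proof. by rewrite /term5 /base !mulrA [(4 * _ + 1) * _]mulrC. Qed.

Definition Dp (x : rat) := (x + 25/24) * (x + 7/24) * (x + 13/24) * (x + 19/24).
Definition Cp (x : rat) := (3 * x + 1) * (3 * x + 2) * (3 * x + 3) * (x + 2/3) *
  (x + 7/6) * (3 * x + 3/2) * (3 * x + 5/2) * (3 * x + 7/2).
Definition rn (x : rat) := 27/256 * (x + 5/6) * (x + 1/2) * (x + 7/6) * (x + 7/6).
Definition Qi (x y : rat) : rat := ((Zr (-8265320)%Z + x * (Zr (-141674764)%Z + x * (Zr (-1060759596)%Z + x * (Zr (-4577606478)%Z + x * (Zr (-12630619980)%Z + x * (Zr (-23319303840)%Z + x * (Zr (-29214601128)%Z + x * (Zr (-24553746432)%Z + x * (Zr (-13264067520)%Z + x * (Zr (-4162928256)%Z + x * Zr (-576948096)%Z)))))))))) + y * ((Zr (-2984835)%Z + x * (Zr (-35840742)%Z + x * (Zr (-186177258)%Z + x * (Zr (-545020056)%Z + x * (Zr (-981710604)%Z + x * (Zr (-1112905008)%Z + x * (Zr (-774839520)%Z + x * (Zr (-302750784)%Z + x * Zr (-50808384)%Z)))))))) + y * ((Zr 5502210%Z + x * (Zr 67981872%Z + x * (Zr 360202734%Z + x * (Zr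 1068882264%Z + x * (Zr 1942923672%Z + x * (Zr 2215382400%Z + x * (Zr 1547509536%Z + x * (Zr 605501568%Z + x * Zr 101616768%Z)))))))) + y * ((Zr 1849995%Z + x * (Zr 14700924%Z + x * (Zr 48436056%Z + x * (Zr 84503088%Z + x * (Zr 81955152%Z + x * (Zr 41710464%Z + x * Zr 8678016%Z)))))) + y * ((Zr (-1750770)%Z + x * (Zr (-14213304)%Z + x * (Zr (-47580696)%Z + x * (Zr (-83861568)%Z + x * (Zr (-81780192)%Z + x * (Zr (-41710464)%Z + x * Zr (-8678016)%Z)))))) + y * ((Zr (-238140)%Z + x * (Zr (-1170288)%Z + x * (Zr (-2052864)%Z + x * (Zr (-1539648)%Z + x * Zr (-419904)%Z)))) + y * (Zr 158760%Z + x * (Zr 780192%Z + x * (Zr 1368576%Z + x * (Zr 1026432%Z + x * Zr 279936%Z)))))))))).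
Definition Gfac := locked (fun x y : rat => y * (y + x + 7/6) * (y + 3 * x + 7/2) * Qi x y / (Zr 1327104 * Dp x * Cp x)).
Lemma GfacE x y : Gfac x y = y * (y + x + 7/6) * (y + 3 * x + 7/2) * Qi x y / (Zr 1327104 * Dp x * Cp x).
Proof. by rewrite /Gfac -lock. Qed.
Definition G (n k : nat) := base n.+1 k * Gfac n%:R k%:R.

Lemma shiftN a d j : d = - a -> d <> 0 -> poch (a + 1) j = poch a j * (d - j%:R) / d.
Proof.
move=> hd hd0; apply: div_intro => //.
by rewrite hd mulrN poch_shift -mulrN opprD.
Qed.
Lemma shiftP a j : a + j%:R <> 0 -> poch a j = poch (a + 1) j * a / (a + j%:R).
Proof. by move=> h; apply: div_intro => //; rewrite poch_shift. Qed.

Lemma key n k : term5 n.+1 k - rn n%:R / Dp n%:R * term5 n k = G n k.+1 - G n k.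
Proof.
rewrite !term5E /G /base !GfacE.
rewrite !pochS factS natrM exprS -(natr1 n) -(natr1 k).
set x := n%:R; set y := k%:R.
have hx : 0 <= x by apply: ler0n.
have hy : 0 <= y by apply: ler0n.
set s := (-1) ^+ k.
set A1 := poch (- (3 * (x + 1))) k.
set A2 := poch (- (x + 1) + 1/3) k.
set A3 := poch (1/2) k.
set K := (k`!)%:R.
set E1 := poch (x + 1 + 7/6) k.
set E2 := poch (3 * (x + 1) + 3/2) k.
set A1' := poch (- (3 * x)) k.
set A2' := poch (- x + 1/3) k.
set E1' := poch (x + 7/6) k.
set E2' := poch (3 * x + 3/2) k.
have hK : 0 < K by rewrite /K ltr0n fact_gt0.
have hE1 : 0 < E1 by apply: poch_gt0; ps.
have hE2 : 0 < E2 by apply: poch_gt0; ps.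
have eA1 : A1' = A1 * (3 * x + 3 - y) / (3 * x + 3) * (3 * x + 2 - y) / (3 * x + 2)
                   * (3 * x + 1 - y) / (3 * x + 1).
  rewrite /A1' (_ : - (3 * x) = - (3 * (x + 1)) + 1 + 1 + 1); last by rring.
  rewrite (@shiftN _ (3 * x + 1)); [|rring|apply: neq0P; ps].
  rewrite (@shiftN _ (3 * x + 2)); [|rring|apply: neq0P; ps].
  rewrite (@shiftN _ (3 * x + 3)); [done|rring|apply: neq0P; ps].
have eA2 : A2' = A2 * (x + 2/3 - y) / (x + 2/3).
  rewrite /A2' (_ : - x + 1/3 = - (x + 1) + 1/3 + 1); last by rfield; sidec.
  rewrite (@shiftN _ (x + 2/3)); [done|rfield; sidec|apply: neq0P; ps].
have eE1 : E1' = E1 * (x + 7/6) / (x + 7/6 + y).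
  rewrite /E1' (@shiftP (x + 7/6)); last by apply: neq0P; ps.
  by rewrite /E1 (_ : x + 1 + 7/6 = x + 7/6 + 1) // addrAC.
have eE2 : E2' = E2 * (3 * x + 7/2) / (3 * x + 7/2 + y) * (3 * x + 5/2) / (3 * x + 5/2 + y)
                  * (3 * x + 3/2) / (3 * x + 3/2 + y).
  rewrite /E2' (@shiftP (3 * x + 3/2)); last by apply: neq0P; ps.
  rewrite (@shiftP (3 * x + 3/2 + 1)); last by apply: neq0P; ps.
  rewrite (@shiftP (3 * x + 3/2 + 1 + 1)); last by apply: neq0P; ps.
  rewrite (_ : 3 * x + 3/2 + 1 + 1 + 1 = 3 * (x + 1) + 3/2); last by rfield; sidec.
  rewrite (_ : 3 * x + 3/2 + 1 + 1 = 3 * x + 7/2); last by rfield; sidec.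
  by rewrite (_ : 3 * x + 3/2 + 1 = 3 * x + 5/2); last by rfield; sidec.
rewrite eA1 eA2 eE1 eE2 /Dp /Cp /rn /Qi.
rfield. all: sidec.
Qed.

Lemma vanish n k : (3 * n < k)%N -> term5 n k = 0.
Proof. by move=> h; rewrite /term5 -(natrM _ 3 n) poch_negnat // !(mul0r, mulr0). Qed.

Definition S n := \sum_(k < (3 * n).+1) term5 n k.

Lemma sum_ext n N : (3 * n < N)%N -> \sum_(k < N) term5 n k = S n.
Proof.
move=> h; rewrite -(subnKC h).
elim: (N - (3 * n).+1)%N => [|d IH]; first by rewrite addn0.
by rewrite addnS big_ord_recr /= IH vanish ?addr0 // ltnS leq_addr.
Qed.

Lemma G0 n : G n 0 = 0.
Proof.
have h : forall x : rat, Gfac x (0%N)%:R = 0.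
  move=> x; rewrite GfacE /Qi; rring.
by rewrite /G h mulr0.
Qed.

Lemma Gend n : G n (3 * n.+1).+1 = 0.
Proof. by rewrite /G /base -(natrM _ 3 n.+1) poch_negnat // !(mul0r, mulr0). Qed.

Lemma keyD n k : term5 n.+1 k = (G n k.+1 - G n k) + rn n%:R / Dp n%:R * term5 n k.
Proof. by apply/eqP; rewrite -subr_eq key. Qed.

Lemma S_step n : S n.+1 = rn n%:R / Dp n%:R * S n.
Proof.
rewrite {1}/S.
under eq_bigr => k _ do rewrite keyD.
rewrite big_split /= -mulr_sumr sum_ext; last by rewrite ltnS mulnS leq_addl.
rewrite -(big_mkord xpredT (fun k => G n k.+1 - G n k)) telescope_sumr //.
by rewrite Gend G0 subr0 add0r.
Qed.

Definition rhs (n : nat) : rat :=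
  (27 / 256) ^+ n *
  (poch (5/6) n * poch (1/2) n * poch (7/6) n ^+ 2) /
  (poch (25/24) n * poch (7/24) n * poch (13/24) n * poch (19/24) n).

Lemma rhs_step n : rhs n.+1 = rn n%:R / Dp n%:R * rhs n.
Proof.
rewrite /rhs /rn /Dp !pochS exprS !expr2.
set x := n%:R.
have hx : 0 <= x by apply: ler0n.
set e := (27 / 256) ^+ n.
set P1 := poch (5/6) n. set P2 := poch (1/2) n. set P3 := poch (7/6) n.
set Q1 := poch (25/24) n. set Q2 := poch (7/24) n.
set Q3 := poch (13/24) n. set Q4 := poch (19/24) n.
have h1 : 0 < Q1 by apply: poch_gt0; ps.
have h2 : 0 < Q2 by apply: poch_gt0; ps.
have h3 : 0 < Q3 by apply: poch_gt0; ps.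
have h4 : 0 < Q4 by apply: poch_gt0; ps.
rfield. all: sidec.
Qed.

Lemma S_rhs n : S n = rhs n.
Proof.
elim: n => [|n IH].
  rewrite /S /rhs muln0 big_ord1 /term5 /= !poch0 !expr0 fact0 expr1n.
  rfield. all: sidec.
by rewrite S_step rhs_step IH.
Qed.

Theorem theorem5 (n N : nat) (hN : (3 * n < N)%N) :
  \sum_(k < N) term5 n k =
  (27 / 256) ^+ n *
  (poch (5/6) n * poch (1/2) n * poch (7/6) n ^+ 2) /
  (poch (25/24) n * poch (7/24) n * poch (13/24) n * poch (19/24) n).
Proof.
by rewrite sum_ext // S_rhs.
Qed.
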